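(* Let $0\le\gamma_2\le\gamma_1\le\frac\pi2$ with $\gamma_1+\gamma_2\le\frac\pi2$ and $-1\le x_3\le1$, and let $\rho=\frac12(\Sigma_0+x_3\Sigma_3)$. Define $$x_3^{(3,4)}:=\frac{-\sin\gamma_1\{\pm\sin\gamma_1+[\cos\gamma_1\cos\gamma_2+\sin^2\gamma_1]\sin\gamma_2\}}{1+\cos\gamma_1\{\cos\gamma_2-\sin\gamma_2[\cos\gamma_1\sin\gamma_2+\sin^2\gamma_1\tan\gamma_2]\}},$$ with the upper sign ($+$) giving $x_3^{(3)}$ and the lower sign ($-$) giving $x_3^{(4)}$. Then $-1\le x_3^{(3)}\le 0\le x_3^{(4)}\le 1$ and $$g(\rho)=\begin{cases}\frac{(1-x_3)[1+\cos(\gamma_1+\gamma_2)]}{4}, & -1\le x_3\le x_3^{(3)},\\[1ex] \dfrac{(1-x_3^2)\sin\gamma_1\cos\gamma_2(\cos\gamma_2\sin\gamma_1-x_3\cos\gamma_1\sin\gamma_2)}{-2\big[x_3^2-(\cos\gamma_2\sin\gamma_1-x_3\cos\gamma_1\sin\gamma_2)^2\big]}, & x_3^{(3)}<x_3<x_3^{(4)},\\[1ex] \frac{(1+x_3)[1+\cos(\gamma_1-\gamma_2)]}{4}, & x_3^{(4)}\le x_3\le1.\end{cases}$$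
   Context: On two qubits, let $\sigma_1,\sigma_2,\sigma_3$ denote the Pauli matrices acting on the first qubit and $\tau_1,\tau_2,\tau_3$ those acting on the second qubit (tensor products with the identity understood). For parameters $\gamma_1,\gamma_2$ set $u=\cos\gamma_1\cos\gamma_2$, $v=\sin\gamma_1\sin\gamma_2$, $z_1=\sin\gamma_1\cos\gamma_2$, $z_2=\cos\gamma_1\sin\gamma_2$, and define the operators $\Sigma_0=\frac12(I+u\sigma_3+v\tau_3+z_1\sigma_1\tau_1+z_2\sigma_2\tau_2)$ (a rank-two projector) and $\Sigma_3=\frac12(v\sigma_3+u\tau_3-z_2\sigma_1\tau_1-z_1\sigma_2\tau_2+\sigma_3\tau_3)$. For a two-qubit density matrix $\rho$, $g(\rho):=\max\operatorname{tr}[\rho(\rho_1\otimes\rho_2)]$, the maximum over all pure single-qubit states $\rho_1,\rho_2$. *)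

(* Defs.v *)
From Stdlib Require Import Reals Lra.
Open Scope R_scope.

Definition C : Type := (R * R)%type.
Definition Cre (z : C) : R := fst z.
Definition Cim (z : C) : R := snd z.
Definition RtoC (r : R) : C := (r, 0).
Definition C0 : C := (0, 0).
Definition C1 : C := (1, 0).
Definition Ci : C := (0, 1).
Definition Cadd (a b : C) : C := (fst a + fst b, snd a + snd b).
Definition Cmul (a b : C) : C :=
  (fst a * fst b - snd a * snd b, fst a * snd b + snd a * fst b).
Definition Copp (a : C) : C := (- fst a, - snd a).
Definition Cconj (a : C) : C := (fst a, - snd a).
Definition Cnorm2 (a : C) : R := fst a * fst a + snd a * snd a.

Fixpoint Csum (n : nat) (f : nat -> C) : C :=
  match n with
  | O => C0
  | S m => Cadd (Csum m f) (f m)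
  end.

(* ---------- matrices: entries indexed from 0; only indices < dim matter ---------- *)
Definition Mat : Type := nat -> nat -> C.
Definition madd (A B : Mat) : Mat := fun i j => Cadd (A i j) (B i j).
Definition mscale (r : R) (A : Mat) : Mat := fun i j => Cmul (RtoC r) (A i j).
Definition mmul (n : nat) (A B : Mat) : Mat :=
  fun i j => Csum n (fun k => Cmul (A i k) (B k j)).
Definition mtrace (n : nat) (A : Mat) : C := Csum n (fun i => A i i).
(* Kronecker product of two 2x2 matrices; index i of C^4 = 2*a + b,
   a the first-qubit index, b the second-qubit index. *)
Definition kron2 (A B : Mat) : Mat :=
  fun i j => Cmul (A (Nat.div i 2) (Nat.div j 2)) (B (Nat.modulo i 2) (Nat.modulo j 2)).

Definition mat2 (a b c d : C) : Mat :=
  fun i j => match i, j with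
             | 0%nat, 0%nat => a | 0%nat, 1%nat => b
             | 1%nat, 0%nat => c | 1%nat, 1%nat => d
             | _, _ => C0 end.
Definition I2 : Mat := mat2 C1 C0 C0 C1.
Definition pauli1 : Mat := mat2 C0 C1 C1 C0.
Definition pauli2 : Mat := mat2 C0 (Copp Ci) Ci C0.
Definition pauli3 : Mat := mat2 C1 C0 C0 (Copp C1).
Definition I4 : Mat := kron2 I2 I2.

Definition sig (P : Mat) : Mat := kron2 P I2.
Definition tau (P : Mat) : Mat := kron2 I2 P.

Definition uu (g1 g2 : R) := cos g1 * cos g2.
Definition vv (g1 g2 : R) := sin g1 * sin g2.
Definition zz1 (g1 g2 : R) := sin g1 * cos g2.
Definition zz2 (g1 g2 : R) := cos g1 * sin g2.

Definition Sigma0 (g1 g2 : R) : Mat :=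
  mscale (1/2)
    (madd I4 (madd (mscale (uu g1 g2) (sig pauli3))
      (madd (mscale (vv g1 g2) (tau pauli3))
        (madd (mscale (zz1 g1 g2) (kron2 pauli1 pauli1))
              (mscale (zz2 g1 g2) (kron2 pauli2 pauli2)))))).

Definition Sigma3 (g1 g2 : R) : Mat :=
  mscale (1/2)
    (madd (mscale (vv g1 g2) (sig pauli3))
      (madd (mscale (uu g1 g2) (tau pauli3))
        (madd (mscale (- zz2 g1 g2) (kron2 pauli1 pauli1))
          (madd (mscale (- zz1 g1 g2) (kron2 pauli2 pauli2))
                (kron2 pauli3 pauli3))))).

Definition rho (g1 g2 x3 : R) : Mat :=
  mscale (1/2) (madd (Sigma0 g1 g2) (mscale x3 (Sigma3 g1 g2))).

Definition unit2 (psi : nat -> C) : Prop := Cnorm2 (psi 0%nat) + Cnorm2 (psi 1%nat) = 1.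
Definition proj (psi : nat -> C) : Mat := fun i j => Cmul (psi i) (Cconj (psi j)).

Definition overlap (r : Mat) (psi phi : nat -> C) : C :=
  mtrace 4 (mmul 4 r (kron2 (proj psi) (proj phi))).

(* g(r) = m : m is the maximum of tr[r (rho1 (x) rho2)] over pure rho1, rho2
   (the trace is real for Hermitian r; we require it real at the maximizer). *)
Definition g_is (r : Mat) (m : R) : Prop :=
  (forall psi phi, unit2 psi -> unit2 phi -> Cre (overlap r psi phi) <= m) /\
  (exists psi phi, unit2 psi /\ unit2 phi /\ overlap r psi phi = RtoC m).

Definition x3_34 (s g1 g2 : R) : R :=
  (- sin g1 * (s * sin g1 + (cos g1 * cos g2 + sin g1 ^ 2) * sin g2)) /
  (1 + cos g1 * (cos g2 - sin g2 * (cos g1 * sin g2 + sin g1 ^ 2 * tan g2))).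
Definition x3_3 (g1 g2 : R) : R := x3_34 1 g1 g2.
Definition x3_4 (g1 g2 : R) : R := x3_34 (-1) g1 g2.

Definition g_formula (g1 g2 x3 : R) : R :=
  if Rle_dec x3 (x3_3 g1 g2) then (1 - x3) * (1 + cos (g1 + g2)) / 4
  else if Rlt_dec x3 (x3_4 g1 g2) then
    ((1 - x3 ^ 2) * sin g1 * cos g2 * (cos g2 * sin g1 - x3 * cos g1 * sin g2)) /
    (-2 * (x3 ^ 2 - (cos g2 * sin g1 - x3 * cos g1 * sin g2) ^ 2))
  else (1 + x3) * (1 + cos (g1 - g2)) / 4.

(* Main.v *)
Require Import Defs.
From Stdlib Require Import Reals Lra.
From Stdlib Require Import Reals.Nsatz.
Open Scope R_scope.

Definition Dom (s1 c1 s2 c2 : R) : Prop :=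
  s1*s1+c1*c1=1 /\ s2*s2+c2*c2=1 /\ 0<=s1 /\ 0<=c1 /\ 0<=s2 /\ 0<c2 /\
  s2<=s1 /\ c1<=c2 /\ s1<=c2 /\ s2<=c1 /\ 0<=s1*c2-c1*s2 /\ 0<=c1*c2-s1*s2.

Ltac dom HD := destruct HD as (H1 & H2 & Hs1 & Hc1 & Hs2 & Hc2 & Hs21 & Hc12 & Hs1c2 & Hs2c1 & Hd & He).

Lemma c1_le1 s1 c1 s2 c2 : Dom s1 c1 s2 c2 -> c1 <= 1 /\ s1 <= 1 /\ s2 <= 1 /\ c2 <= 1 /\ s2 < 1.
Proof. intro HD; dom HD; repeat split; nra. Qed.

Lemma Den_pos s1 c1 s2 c2 : Dom s1 c1 s2 c2 -> 0 < (c2+c1*c2*c2-c1*s2*s2*(c1*c2+s1*s1)).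
Proof.
  intro HD. pose proof (c1_le1 _ _ _ _ HD) as (Hc1' & Hs1' & Hs2' & Hc2' & Hs2l). dom HD.
  assert (HW : c1*(c1*c2+s1*s1) <= 1) by nra.
  assert (c1*s2*s2*(c1*c2+s1*s1) <= s2*s2) by nra.
  assert (s2*s2 <= s2*c2) by nra.
  nra.
Qed.

Lemma Den_P3_id s1 c1 s2 c2 : s1*s1+c1*c1=1 -> s2*s2+c2*c2=1 ->
  (c2+c1*c2*c2-c1*s2*s2*(c1*c2+s1*s1)) - (s1*c2*(s1+(c1*c2+s1*s1)*s2)) = c1*c1*c2 + c1*c2*c2 - (c1*c2+s1*s1)*s2*(c1*s2+s1*c2).
Proof. intros H1 H2. nsatz. Qed.

Lemma tt_ee_id s1 c1 s2 c2 : s1*s1+c1*c1=1 -> s2*s2+c2*c2=1 -> (c1*s2+s1*c2)*(c1*s2+s1*c2) + (c1*c2-s1*s2)*(c1*c2-s1*s2) = 1.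
Proof. intros H1 H2. nsatz. Qed.

Lemma tt_le1 s1 c1 s2 c2 : Dom s1 c1 s2 c2 -> (c1*s2+s1*c2) <= 1.
Proof. intro HD; dom HD.
  pose proof (tt_ee_id _ _ _ _ H1 H2). nra. Qed.

Lemma P3_le s1 c1 s2 c2 : Dom s1 c1 s2 c2 -> (s1*c2*(s1+(c1*c2+s1*s1)*s2)) <= (c2+c1*c2*c2-c1*s2*s2*(c1*c2+s1*s1)).
Proof.
  intro HD. pose proof (tt_le1 _ _ _ _ HD) as Ht.
  pose proof (c1_le1 _ _ _ _ HD) as (Hc1' & Hs1' & Hs2' & Hc2' & Hs2l). dom HD.
  pose proof (Den_P3_id _ _ _ _ H1 H2) as E.
  assert (HW : 0 <= (c1*c2+s1*s1)) by nra.
  assert (0 <= (c1*c2+s1*s1)*s2) by nra. assert (A1 : (c1*c2+s1*s1)*s2*(c1*s2+s1*c2) <= (c1*c2+s1*s1)*s2) by nra.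
  assert (0 <= c1*c2) by nra. assert (A2 : c1*c2*s2 <= c1*c2*c1) by nra.
  assert (A3 : s1*s1*s2 <= c2*c2*c1) by (apply Rmult_le_compat; nra).
  nra.
Qed.

Lemma P3_nn s1 c1 s2 c2 : Dom s1 c1 s2 c2 -> 0 <= (s1*c2*(s1+(c1*c2+s1*s1)*s2)).
Proof. intro HD; dom HD. assert (0 <= (c1*c2+s1*s1)) by nra. assert (0 <= s1*c2) by nra.
  apply Rmult_le_pos; nra. Qed.

Lemma P4_id s1 c1 s2 c2 : s1*s1+c1*c1=1 -> s2*s2+c2*c2=1 ->
  (s1+s2)*(s1 - (c1*c2+s1*s1)*s2) = (s1*c2-c1*s2)*((s1+s2)*c2 - s1*s2*(c1*s2+s1*c2)).
Proof. intros H1 H2. nsatz. Qed.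

Lemma P4_nn s1 c1 s2 c2 : Dom s1 c1 s2 c2 -> 0 <= (s1*c2*(s1-(c1*c2+s1*s1)*s2)).
Proof.
  intro HD. pose proof (tt_le1 _ _ _ _ HD) as Ht.
  pose proof (c1_le1 _ _ _ _ HD) as (Hc1' & Hs1' & Hs2' & Hc2' & Hs2l). dom HD.
  pose proof (P4_id _ _ _ _ H1 H2) as E.
  destruct (Req_dec s1 0) as [Z|Z].
  - rewrite Z; lra.
  - assert (Hp : 0 < s1) by lra.
    assert (A1 : s1*s2*(c1*s2+s1*c2) <= s1*s2) by (assert (0<=s1*s2) by nra; nra).
    assert (A2 : 0 <= (s1+s2)*c2 - s1*s2*(c1*s2+s1*c2)) by nra.
    assert (A3 : 0 <= (s1+s2)*(s1 - (c1*c2+s1*s1)*s2)) by (rewrite E; apply Rmult_le_pos; lra).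
    assert (A4 : 0 <= s1 - (c1*c2+s1*s1)*s2).
    { destruct (Rle_lt_dec 0 (s1 - (c1*c2+s1*s1)*s2)) as [h|h]; [lra|]. nra. }
    assert (0 <= s1*c2) by nra. apply Rmult_le_pos; lra.
Qed.

Lemma P4_le s1 c1 s2 c2 : Dom s1 c1 s2 c2 -> (s1*c2*(s1-(c1*c2+s1*s1)*s2)) <= (c2+c1*c2*c2-c1*s2*s2*(c1*c2+s1*s1)).
Proof.
  intro HD. pose proof (P3_le _ _ _ _ HD). pose proof HD as HD'. dom HD'.
  assert (0 <= (c1*c2+s1*s1)) by nra. assert (0 <= s1*c2*(c1*c2+s1*s1)*s2) by (repeat apply Rmult_le_pos; nra).
  assert ((s1*c2*(s1+(c1*c2+s1*s1)*s2)) - (s1*c2*(s1-(c1*c2+s1*s1)*s2)) = 2*(s1*c2*(c1*c2+s1*s1)*s2)) by ring. lra.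
Qed.

Lemma bound_gen Rr Ss c T2 x M a a1 a2 b b1 b2 :
  a*a+a1*a1+a2*a2 = 1 -> b*b+b1*b1+b2*b2 = 1 -> T2*T2 <= c*c ->
  0 <= M - Rr*a -> (Ss+x*a)*(Ss+x*a) + c*c*(1-a*a) <= (M-Rr*a)*(M-Rr*a) ->
  Rr*a + Ss*b + x*a*b + c*a1*b1 + T2*a2*b2 <= M.
Proof.
  intros Ha Hb HT HM HQ.
  set (w0 := Ss + x*a). set (w1 := c*a1). set (w2 := T2*a2).
  set (dot := w0*b + w1*b1 + w2*b2).
  assert (L : dot*dot <= (w0*w0+w1*w1+w2*w2)*(b*b+b1*b1+b2*b2)).
  { assert (E : (w0*w0+w1*w1+w2*w2)*(b*b+b1*b1+b2*b2) - dot*dot =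
       (w0*b1-w1*b)*(w0*b1-w1*b) + (w0*b2-w2*b)*(w0*b2-w2*b) + (w1*b2-w2*b1)*(w1*b2-w2*b1))
      by (unfold dot; ring).
    assert (0 <= (w0*b1-w1*b)*(w0*b1-w1*b)) by apply Rle_0_sqr.
    assert (0 <= (w0*b2-w2*b)*(w0*b2-w2*b)) by apply Rle_0_sqr.
    assert (0 <= (w1*b2-w2*b1)*(w1*b2-w2*b1)) by apply Rle_0_sqr. lra. }
  rewrite Hb, Rmult_1_r in L.
  assert (QL2 : w2*w2 <= c*c*(a2*a2)).
  { unfold w2. assert (0 <= a2*a2) by apply Rle_0_sqr.
    replace (T2*a2*(T2*a2)) with ((T2*T2)*(a2*a2)) by ring.
    apply Rmult_le_compat_r; lra. }
  assert (QL3 : w0*w0+w1*w1+w2*w2 <= (Ss+x*a)*(Ss+x*a) + c*c*(1-a*a)).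
  { unfold w0, w1. replace (1-a*a) with (a1*a1+a2*a2) by lra. nra. }
  assert (QL4 : dot*dot <= (M-Rr*a)*(M-Rr*a)) by lra.
  assert (QL5 : dot <= M - Rr*a) by nra.
  unfold dot, w0, w1, w2 in *.
  replace (Rr*a + Ss*b + x*a*b + c*a1*b1 + T2*a2*b2) with (Rr*a + ((Ss+x*a)*b + c*a1*b1 + T2*a2*b2)) by ring. lra.
Qed.

Lemma L4_nn s1 c1 s2 c2 : Dom s1 c1 s2 c2 -> 0 <= ((1+(c1*c2))*(1+(s1*s2))-(c1*s2)*(c1*s2)).
Proof. intro HD. pose proof (c1_le1 _ _ _ _ HD) as (Hc1' & Hs1' & Hs2' & Hc2' & Hs2l). dom HD.
  assert (0 <= (c1*s2)) by nra. assert ((c1*s2) <= 1) by nra. assert (0 <= (c1*c2)) by nra. assert (0<=(s1*s2)) by nra. nra. Qed.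

Lemma L3_nn s1 c1 s2 c2 : Dom s1 c1 s2 c2 -> 0 <= ((1-(s1*s2))*(1+(c1*c2))-(c1*s2)*(c1*s2)).
Proof. intro HD. pose proof (tt_le1 _ _ _ _ HD) as Ht.
  pose proof (c1_le1 _ _ _ _ HD) as (Hc1' & Hs1' & Hs2' & Hc2' & Hs2l). dom HD.
  assert (E : ((1-(s1*s2))*(1+(c1*c2))-(c1*s2)*(c1*s2)) = 1 + (c1*c2-s1*s2) - (c1*s2)*(c1*s2+s1*c2)) by ring.
  assert (0 <= (c1*s2)) by nra. assert ((c1*s2) <= 1) by nra. assert (0 <= (c1*s2+s1*c2)) by nra.
  assert ((c1*s2)*(c1*s2+s1*c2) <= 1) by nra. assert (0 <= (c1*c2)) by nra. assert (0<=(s1*s2)) by nra.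
  nra. Qed.

Lemma Id8 s1 c1 s2 c2 : s1*s1+c1*c1=1 -> s2*s2+c2*c2=1 -> ((1+(c1*c2))*(1+(s1*s2))-(c1*s2)*(c1*s2))*(s1*c2*(s1-(c1*c2+s1*s1)*s2))*(s1*c2*(s1-(c1*c2+s1*s1)*s2)) + (((c1*c2)+(s1*s2))*((c1*c2)+(s1*s2)+1))*(s1*c2*(s1-(c1*c2+s1*s1)*s2))*(c2+c1*c2*c2-c1*s2*s2*(c1*c2+s1*s1)) + ((c1*c2)*(s1*s2)-(s1*c2)*(s1*c2))*(c2+c1*c2*c2-c1*s2*s2*(c1*c2+s1*s1))*(c2+c1*c2*c2-c1*s2*s2*(c1*c2+s1*s1)) = 0.
Proof. intros H1 H2. nsatz. Qed.
Lemma Id9 s1 c1 s2 c2 : s1*s1+c1*c1=1 -> s2*s2+c2*c2=1 -> ((1-(s1*s2))*(1+(c1*c2))-(c1*s2)*(c1*s2))*(s1*c2*(s1+(c1*c2+s1*s1)*s2))*(s1*c2*(s1+(c1*c2+s1*s1)*s2)) - (-(((c1*c2)-(s1*s2))*((c1*c2)-(s1*s2)+1)))*(s1*c2*(s1+(c1*c2+s1*s1)*s2))*(c2+c1*c2*c2-c1*s2*s2*(c1*c2+s1*s1)) + (-((c1*c2)*(s1*s2)+(s1*c2)*(s1*c2)))*(c2+c1*c2*c2-c1*s2*s2*(c1*c2+s1*s1))*(c2+c1*c2*c2-c1*s2*s2*(c1*c2+s1*s1)) = 0.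
Proof. intros H1 H2. nsatz. Qed.
Lemma J1 s1 c1 s2 c2 x : s1*s1+c1*c1=1 -> s2*s2+c2*c2=1 -> (c1*c2+x*s1*s2)*(c1*c2+x*s1*s2)+(s1*c2-x*c1*s2)*(s1*c2-x*c1*s2) = c2*c2+x*x*s2*s2.
Proof. intros H1 H2. nsatz. Qed.

Lemma case_up s1 c1 s2 c2 x a : Dom s1 c1 s2 c2 -> x <= 1 -> (s1*c2*(s1-(c1*c2+s1*s1)*s2)) <= (c2+c1*c2*c2-c1*s2*s2*(c1*c2+s1*s1))*x -> -1 <= a <= 1 ->
  0 <= ((c1*c2+x*s1*s2)+(s1*s2+x*c1*c2)+x) - (c1*c2+x*s1*s2)*a /\
  ((s1*s2+x*c1*c2)+x*a)*((s1*s2+x*c1*c2)+x*a) + (s1*c2-x*c1*s2)*(s1*c2-x*c1*s2)*(1-a*a) <= (((c1*c2+x*s1*s2)+(s1*s2+x*c1*c2)+x) - (c1*c2+x*s1*s2)*a)*(((c1*c2+x*s1*s2)+(s1*s2+x*c1*c2)+x) - (c1*c2+x*s1*s2)*a).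
Proof.
  intros HD Hx1 Hx Ha.
  pose proof (Den_pos _ _ _ _ HD) as HDen. pose proof (P4_nn _ _ _ _ HD) as HP4.
  pose proof (L4_nn _ _ _ _ HD) as HL4.
  pose proof HD as HD'. dom HD'.
  pose proof (Id8 _ _ _ _ H1 H2) as E8. pose proof (J1 _ _ _ _ x H1 H2) as EJ.
  assert (ED : (c2+c1*c2*c2-c1*s2*s2*(c1*c2+s1*s1))*(c2+c1*c2*c2-c1*s2*s2*(c1*c2+s1*s1))*(((c1*c2+x*s1*s2)+x)*((s1*s2+x*c1*c2)+x) - (s1*c2-x*c1*s2)*(s1*c2-x*c1*s2)) = ((c2+c1*c2*c2-c1*s2*s2*(c1*c2+s1*s1))*x - (s1*c2*(s1-(c1*c2+s1*s1)*s2)))*(((1+(c1*c2))*(1+(s1*s2))-(c1*s2)*(c1*s2))*((c2+c1*c2*c2-c1*s2*s2*(c1*c2+s1*s1))*x+(s1*c2*(s1-(c1*c2+s1*s1)*s2))) + (((c1*c2)+(s1*s2))*((c1*c2)+(s1*s2)+1))*(c2+c1*c2*c2-c1*s2*s2*(c1*c2+s1*s1)))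
            + (((1+(c1*c2))*(1+(s1*s2))-(c1*s2)*(c1*s2))*(s1*c2*(s1-(c1*c2+s1*s1)*s2))*(s1*c2*(s1-(c1*c2+s1*s1)*s2)) + (((c1*c2)+(s1*s2))*((c1*c2)+(s1*s2)+1))*(s1*c2*(s1-(c1*c2+s1*s1)*s2))*(c2+c1*c2*c2-c1*s2*s2*(c1*c2+s1*s1)) + ((c1*c2)*(s1*s2)-(s1*c2)*(s1*c2))*(c2+c1*c2*c2-c1*s2*s2*(c1*c2+s1*s1))*(c2+c1*c2*c2-c1*s2*s2*(c1*c2+s1*s1)))) by ring.
  assert (EP : (((c1*c2+x*s1*s2)+(s1*s2+x*c1*c2)+x) - (c1*c2+x*s1*s2)*a)*(((c1*c2+x*s1*s2)+(s1*s2+x*c1*c2)+x) - (c1*c2+x*s1*s2)*a) - (((s1*s2+x*c1*c2)+x*a)*((s1*s2+x*c1*c2)+x*a) + (s1*c2-x*c1*s2)*(s1*c2-x*c1*s2)*(1-a*a)) =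
     (1-a)*(2*(((c1*c2+x*s1*s2)+(s1*s2+x*c1*c2)+x)*(c1*c2+x*s1*s2)+(s1*s2+x*c1*c2)*x) - ((c1*c2+x*s1*s2)*(c1*c2+x*s1*s2)+(s1*c2-x*c1*s2)*(s1*c2-x*c1*s2)-x*x)*(1+a))) by ring.
  assert (HR : 0 <= (c1*c2+x*s1*s2) /\ 0 <= (s1*s2+x*c1*c2) /\ 0 <= (((c1*c2)+(s1*s2))*((c1*c2)+(s1*s2)+1))).
  { assert (Hx0 : 0 <= x).
    { set (Dn := (c2+c1*c2*c2-c1*s2*s2*(c1*c2+s1*s1))) in *. set (p4 := (s1*c2*(s1-(c1*c2+s1*s1)*s2))) in *. clear -HDen HP4 Hx. nra. }
    assert (0 <= x*s1*s2) by (repeat apply Rmult_le_pos; lra).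
    assert (0 <= x*c1*c2) by (repeat apply Rmult_le_pos; lra).
    assert (0 <= c1*c2) by (repeat apply Rmult_le_pos; lra).
    assert (0 <= s1*s2) by (repeat apply Rmult_le_pos; lra).
    split; [lra|split; [lra|]]. apply Rmult_le_pos; lra. }
  destruct HR as (HR & HS & HB4).
  assert (Hx0 : 0 <= x).
  { set (Dn := (c2+c1*c2*c2-c1*s2*s2*(c1*c2+s1*s1))) in *. set (p4 := (s1*c2*(s1-(c1*c2+s1*s1)*s2))) in *. clear -HDen HP4 Hx. nra. }
  assert (Hal : 0 <= (c1*c2+x*s1*s2)*(c1*c2+x*s1*s2)+(s1*c2-x*c1*s2)*(s1*c2-x*c1*s2)-x*x).
  { rewrite EJ. assert (x*x <= 1) by (clear -Hx0 Hx1; nra).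
    replace (c2*c2+x*x*s2*s2-x*x) with (c2*c2*(1-x*x)) by (clear -H2; nra).
    apply Rmult_le_pos; [apply Rle_0_sqr|lra]. }
  set (Dn := (c2+c1*c2*c2-c1*s2*s2*(c1*c2+s1*s1))) in *. set (p4 := (s1*c2*(s1-(c1*c2+s1*s1)*s2))) in *. set (r := (c1*c2+x*s1*s2)) in *. set (s := (s1*s2+x*c1*c2)) in *.
  set (c := (s1*c2-x*c1*s2)) in *. set (l4 := ((1+(c1*c2))*(1+(s1*s2))-(c1*s2)*(c1*s2))) in *. set (b4 := (((c1*c2)+(s1*s2))*((c1*c2)+(s1*s2)+1))) in *. set (k4 := ((c1*c2)*(s1*s2)-(s1*c2)*(s1*c2))) in *.
  rewrite E8, Rplus_0_r in ED.
  assert (HD4 : 0 <= (r+x)*(s+x) - c*c).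
  { assert (0 <= (Dn*x - p4)*(l4*(Dn*x+p4) + b4*Dn)).
    { apply Rmult_le_pos. lra. assert (0 <= l4*(Dn*x+p4)) by (apply Rmult_le_pos; nra). nra. }
    assert (0 < Dn*Dn) by (clear -HDen; nra).
    set (q := (r+x)*(s+x) - c*c) in *. clear -ED H H0. nra. }
  split. { clear -HR HS Hx0 Ha. nra. }
  assert (0 <= (1-a)*(2*((r+s+x)*r+s*x) - (r*r+c*c-x*x)*(1+a))).
  { apply Rmult_le_pos. lra.
    assert (E3 : 2*((r+s+x)*r+s*x) - (r*r+c*c-x*x)*(1+a) = 2*((r+x)*(s+x) - c*c) + (r*r+c*c-x*x)*(1-a)) by ring.
    rewrite E3. assert (0 <= (r*r+c*c-x*x)*(1-a)) by (apply Rmult_le_pos; lra). lra. }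
  lra.
Qed.

Lemma case_low s1 c1 s2 c2 x a : Dom s1 c1 s2 c2 -> -1 <= x -> (c2+c1*c2*c2-c1*s2*s2*(c1*c2+s1*s1))*x <= - (s1*c2*(s1+(c1*c2+s1*s1)*s2)) -> -1 <= a <= 1 ->
  0 <= ((c1*c2+x*s1*s2)-(s1*s2+x*c1*c2)-x) - (c1*c2+x*s1*s2)*a /\
  ((s1*s2+x*c1*c2)+x*a)*((s1*s2+x*c1*c2)+x*a) + (s1*c2-x*c1*s2)*(s1*c2-x*c1*s2)*(1-a*a) <= (((c1*c2+x*s1*s2)-(s1*s2+x*c1*c2)-x) - (c1*c2+x*s1*s2)*a)*(((c1*c2+x*s1*s2)-(s1*s2+x*c1*c2)-x) - (c1*c2+x*s1*s2)*a).
Proof.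
  intros HD Hxm Hx Ha.
  pose proof (Den_pos _ _ _ _ HD) as HDen. pose proof (P3_nn _ _ _ _ HD) as HP3.
  pose proof (L3_nn _ _ _ _ HD) as HL3.
  pose proof HD as HD'. dom HD'.
  pose proof (Id9 _ _ _ _ H1 H2) as E9. pose proof (J1 _ _ _ _ x H1 H2) as EJ.
  assert (ED : (c2+c1*c2*c2-c1*s2*s2*(c1*c2+s1*s1))*(c2+c1*c2*c2-c1*s2*s2*(c1*c2+s1*s1))*(-((c1*c2+x*s1*s2)-x)*((s1*s2+x*c1*c2)+x) - (s1*c2-x*c1*s2)*(s1*c2-x*c1*s2)) = ((c2+c1*c2*c2-c1*s2*s2*(c1*c2+s1*s1))*x + (s1*c2*(s1+(c1*c2+s1*s1)*s2)))*(((1-(s1*s2))*(1+(c1*c2))-(c1*s2)*(c1*s2))*((c2+c1*c2*c2-c1*s2*s2*(c1*c2+s1*s1))*x-(s1*c2*(s1+(c1*c2+s1*s1)*s2))) + (-(((c1*c2)-(s1*s2))*((c1*c2)-(s1*s2)+1)))*(c2+c1*c2*c2-c1*s2*s2*(c1*c2+s1*s1)))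
            + (((1-(s1*s2))*(1+(c1*c2))-(c1*s2)*(c1*s2))*(s1*c2*(s1+(c1*c2+s1*s1)*s2))*(s1*c2*(s1+(c1*c2+s1*s1)*s2)) - (-(((c1*c2)-(s1*s2))*((c1*c2)-(s1*s2)+1)))*(s1*c2*(s1+(c1*c2+s1*s1)*s2))*(c2+c1*c2*c2-c1*s2*s2*(c1*c2+s1*s1)) + (-((c1*c2)*(s1*s2)+(s1*c2)*(s1*c2)))*(c2+c1*c2*c2-c1*s2*s2*(c1*c2+s1*s1))*(c2+c1*c2*c2-c1*s2*s2*(c1*c2+s1*s1)))) by ring.
  assert (EP : (((c1*c2+x*s1*s2)-(s1*s2+x*c1*c2)-x) - (c1*c2+x*s1*s2)*a)*(((c1*c2+x*s1*s2)-(s1*s2+x*c1*c2)-x) - (c1*c2+x*s1*s2)*a) - (((s1*s2+x*c1*c2)+x*a)*((s1*s2+x*c1*c2)+x*a) + (s1*c2-x*c1*s2)*(s1*c2-x*c1*s2)*(1-a*a)) =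
     (1-a)*(2*(-((c1*c2+x*s1*s2)-x)*((s1*s2+x*c1*c2)+x) - (s1*c2-x*c1*s2)*(s1*c2-x*c1*s2)) + ((c1*c2+x*s1*s2)*(c1*c2+x*s1*s2)+(s1*c2-x*c1*s2)*(s1*c2-x*c1*s2)-x*x)*(1-a))) by ring.
  assert (Hx0 : x <= 0).
  { set (Dn := (c2+c1*c2*c2-c1*s2*s2*(c1*c2+s1*s1))) in *. set (p3 := (s1*c2*(s1+(c1*c2+s1*s1)*s2))) in *. clear -HDen HP3 Hx. nra. }
  assert (HR : 0 <= (c1*c2+x*s1*s2)).
  { assert (0 <= (x+1)*(s1*s2)) by (apply Rmult_le_pos; [lra| apply Rmult_le_pos; lra]).
    clear -He H. nra. }
  assert (HB3 : (-(((c1*c2)-(s1*s2))*((c1*c2)-(s1*s2)+1))) <= 0).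
  { assert (0 <= (c1*c2-s1*s2)*((c1*c2-s1*s2)+1)) by (apply Rmult_le_pos; lra). lra. }
  assert (ERS : (c1*c2+x*s1*s2) = c1*c2 + x*(s1*s2)) by ring.
  assert (Hal : 0 <= (c1*c2+x*s1*s2)*(c1*c2+x*s1*s2)+(s1*c2-x*c1*s2)*(s1*c2-x*c1*s2)-x*x).
  { rewrite EJ. assert (x*x <= 1) by (clear -Hx0 Hxm; nra).
    replace (c2*c2+x*x*s2*s2-x*x) with (c2*c2*(1-x*x)) by (clear -H2; nra).
    apply Rmult_le_pos; [apply Rle_0_sqr|lra]. }
  assert (HSS : (s1*s2+x*c1*c2) = s1*s2 + x*(c1*c2)) by ring.
  set (Dn := (c2+c1*c2*c2-c1*s2*s2*(c1*c2+s1*s1))) in *. set (p3 := (s1*c2*(s1+(c1*c2+s1*s1)*s2))) in *. set (r := (c1*c2+x*s1*s2)) in *. set (s := (s1*s2+x*c1*c2)) in *.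
  set (c := (s1*c2-x*c1*s2)) in *. set (l3 := ((1-(s1*s2))*(1+(c1*c2))-(c1*s2)*(c1*s2))) in *. set (b3 := (-(((c1*c2)-(s1*s2))*((c1*c2)-(s1*s2)+1)))) in *. set (k3 := (-((c1*c2)*(s1*s2)+(s1*c2)*(s1*c2)))) in *.
  rewrite E9, Rplus_0_r in ED.
  assert (HD3 : 0 <= -(r-x)*(s+x) - c*c).
  { assert (0 <= (Dn*x + p3)*(l3*(Dn*x-p3) + b3*Dn)).
    { assert (l3*(Dn*x-p3) <= 0).
      { assert (0 <= l3*(p3 - Dn*x)) by (apply Rmult_le_pos; lra). lra. }
      assert (b3*Dn <= 0) by (assert (0 <= (-b3)*Dn) by (apply Rmult_le_pos; lra); lra).
      assert (0 <= (-(Dn*x + p3))*(-(l3*(Dn*x-p3) + b3*Dn))) by (apply Rmult_le_pos; lra).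
      lra. }
    assert (0 < Dn*Dn) by (clear -HDen; nra).
    set (q := -(r-x)*(s+x) - c*c) in *. clear -ED H H0. nra. }
  assert (HSx : s + x <= 0).
  { destruct (Rle_lt_dec (s+x) 0) as [h|h]; [exact h|exfalso].
    assert (h2 : (r-x)*(s+x) <= 0) by (assert (0 <= c*c) by apply Rle_0_sqr; lra).
    assert (h3 : r - x <= 0) by (clear -h h2; nra).
    assert (hr : r = 0) by lra. assert (hx : x = 0) by lra.
    rewrite hx in ERS, HSS. assert (c1*c2 = 0) by lra.
    assert (c1 = 0) by (clear -H Hc2; nra).
    assert (s2 = 0) by lra. rewrite hx in h. assert (s = 0) by (rewrite HSS; subst s2; ring).
    lra. }
  split. { assert (0 <= r*(1-a)) by (apply Rmult_le_pos; lra). lra. }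
  assert (0 <= (1-a)*(2*(-(r-x)*(s+x) - c*c) + (r*r+c*c-x*x)*(1-a))).
  { apply Rmult_le_pos. lra.
    assert (0 <= (r*r+c*c-x*x)*(1-a)) by (apply Rmult_le_pos; lra). lra. }
  lra.
Qed.

Lemma Id5 s1 c1 s2 c2 x : s1*s1+c1*c1=1 -> s2*s2+c2*c2=1 -> (((s1*c2-x*c1*s2)*(s1*c2-x*c1*s2)-x*x)*c2-((s1*s2+x*c1*c2)*x*c2+(c1*c2+x*s1*s2)*(s1*c2-x*c1*s2)*s1))*(c2+c1*c2*c2-c1*s2*s2*(c1*c2+s1*s1)) = ((c2+c1*c2*c2-c1*s2*s2*(c1*c2+s1*s1))*x+(s1*c2*(s1+(c1*c2+s1*s1)*s2)))*((s1*c2*(s1-(c1*c2+s1*s1)*s2))-(c2+c1*c2*c2-c1*s2*s2*(c1*c2+s1*s1))*x).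
Proof. intros H1 H2. nsatz. Qed.
Lemma Iam s1 c1 s2 c2 x : s1*s1+c1*c1=1 -> s2*s2+c2*c2=1 -> 2*(((s1*c2-x*c1*s2)*(s1*c2-x*c1*s2)-x*x)*c2+((s1*s2+x*c1*c2)*x*c2+(c1*c2+x*s1*s2)*(s1*c2-x*c1*s2)*s1)) = (1+x)*((c1*c2+s1*s2)*(c2*(1-(c1*c2+s1*s2))+(s1*c2-c1*s2)*s1)) + (1-x)*((c1*c2-s1*s2)*(c2*(1-(c1*c2-s1*s2))+(c1*s2+s1*c2)*s1)) + 2*((c2*(c1*c1*s2*s2-1+c1*c2)-c1*s1*s1*s2*s2)*(x*x-1)).
Proof. intros H1 H2. nsatz. Qed.
Lemma pp_dd_id s1 c1 s2 c2 : s1*s1+c1*c1=1 -> s2*s2+c2*c2=1 -> (c1*c2+s1*s2)*(c1*c2+s1*s2) + (s1*c2-c1*s2)*(s1*c2-c1*s2) = 1.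
Proof. intros H1 H2. nsatz. Qed.

Lemma mid_facts s1 c1 s2 c2 x : Dom s1 c1 s2 c2 -> -1 <= x <= 1 -> -(s1*c2*(s1+(c1*c2+s1*s1)*s2)) < (c2+c1*c2*c2-c1*s2*s2*(c1*c2+s1*s1))*x -> (c2+c1*c2*c2-c1*s2*s2*(c1*c2+s1*s1))*x < (s1*c2*(s1-(c1*c2+s1*s1)*s2)) ->
  0 < s1 /\ 0 < (s1*c2-x*c1*s2) /\ 0 < ((s1*c2-x*c1*s2)*(s1*c2-x*c1*s2)-x*x) /\ 0 <= (((s1*c2-x*c1*s2)*(s1*c2-x*c1*s2)-x*x)*c2-((s1*s2+x*c1*c2)*x*c2+(c1*c2+x*s1*s2)*(s1*c2-x*c1*s2)*s1)) /\ 0 <= (((s1*c2-x*c1*s2)*(s1*c2-x*c1*s2)-x*x)*c2+((s1*s2+x*c1*c2)*x*c2+(c1*c2+x*s1*s2)*(s1*c2-x*c1*s2)*s1)).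
Proof.
  intros HD Hx Hl Hu.
  pose proof (Den_pos _ _ _ _ HD) as HDen. pose proof (P4_le _ _ _ _ HD) as HP4.
  pose proof (tt_le1 _ _ _ _ HD) as Ht.
  pose proof (c1_le1 _ _ _ _ HD) as (Hc1' & Hs1' & Hs2' & Hc2' & Hs2l).
  pose proof HD as HD'. dom HD'.
  pose proof (Id5 _ _ _ _ x H1 H2) as E5. pose proof (Iam _ _ _ _ x H1 H2) as Eam.
  pose proof (pp_dd_id _ _ _ _ H1 H2) as Epd. pose proof (tt_ee_id _ _ _ _ H1 H2) as Ete.
  assert (Es : (s1*c2*(s1+(c1*c2+s1*s1)*s2)) + (s1*c2*(s1-(c1*c2+s1*s1)*s2)) = 2*(s1*s1*c2)) by ring.
  assert (Ec : (s1*c2-x*c1*s2) = (s1*c2-c1*s2) + (1-x)*(c1*s2)) by ring.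
  assert (Ek : (((s1*c2-x*c1*s2)*(s1*c2-x*c1*s2)-x*x)*c2-((s1*s2+x*c1*c2)*x*c2+(c1*c2+x*s1*s2)*(s1*c2-x*c1*s2)*s1)) + (((s1*c2-x*c1*s2)*(s1*c2-x*c1*s2)-x*x)*c2+((s1*s2+x*c1*c2)*x*c2+(c1*c2+x*s1*s2)*(s1*c2-x*c1*s2)*s1)) = 2*(((s1*c2-x*c1*s2)*(s1*c2-x*c1*s2)-x*x)*c2)) by ring.
  assert (Hs1p : 0 < s1).
  { assert (0 < s1*s1*c2) by (set (p3 := (s1*c2*(s1+(c1*c2+s1*s1)*s2))) in *; set (p4 := (s1*c2*(s1-(c1*c2+s1*s1)*s2))) in *; lra).
    destruct (Req_dec s1 0) as [Z|Z]; [rewrite Z in H; lra|lra]. }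
  assert (Hx1 : x < 1).
  { set (Dn := (c2+c1*c2*c2-c1*s2*s2*(c1*c2+s1*s1))) in *. set (p4 := (s1*c2*(s1-(c1*c2+s1*s1)*s2))) in *. clear -HDen HP4 Hu. nra. }
  assert (Hap : 0 < (((s1*c2-x*c1*s2)*(s1*c2-x*c1*s2)-x*x)*c2-((s1*s2+x*c1*c2)*x*c2+(c1*c2+x*s1*s2)*(s1*c2-x*c1*s2)*s1))).
  { set (Dn := (c2+c1*c2*c2-c1*s2*s2*(c1*c2+s1*s1))) in *. set (p4 := (s1*c2*(s1-(c1*c2+s1*s1)*s2))) in *. set (p3 := (s1*c2*(s1+(c1*c2+s1*s1)*s2))) in *. set (q := (((s1*c2-x*c1*s2)*(s1*c2-x*c1*s2)-x*x)*c2-((s1*s2+x*c1*c2)*x*c2+(c1*c2+x*s1*s2)*(s1*c2-x*c1*s2)*s1))) in *.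
    assert (0 < (Dn*x+p3)*(p4-Dn*x)) by (apply Rmult_lt_0_compat; lra).
    clear -E5 H HDen. nra. }
  assert (Ham : 0 <= (((s1*c2-x*c1*s2)*(s1*c2-x*c1*s2)-x*x)*c2+((s1*s2+x*c1*c2)*x*c2+(c1*c2+x*s1*s2)*(s1*c2-x*c1*s2)*s1))).
  { assert (0 <= ((c1*c2+s1*s2)*(c2*(1-(c1*c2+s1*s2))+(s1*c2-c1*s2)*s1))).
    { assert (0 <= (c1*c2+s1*s2)) by (apply Rplus_le_le_0_compat; apply Rmult_le_pos; lra).
      assert ((c1*c2+s1*s2) <= 1) by (clear -Epd H; set (q:=(c1*c2+s1*s2)) in *; set (e:=(s1*c2-c1*s2)) in *; nra).
      apply Rmult_le_pos; [lra|]. assert (0 <= (s1*c2-c1*s2)*s1) by (apply Rmult_le_pos; lra).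
      assert (0 <= c2*(1-(c1*c2+s1*s2))) by (apply Rmult_le_pos; lra). lra. }
    assert (0 <= ((c1*c2-s1*s2)*(c2*(1-(c1*c2-s1*s2))+(c1*s2+s1*c2)*s1))).
    { assert (0 <= (c1*s2+s1*c2)) by (apply Rplus_le_le_0_compat; apply Rmult_le_pos; lra).
      assert ((c1*c2-s1*s2) <= 1) by (clear -Ete He; set (q:=(c1*c2-s1*s2)) in *; set (e:=(c1*s2+s1*c2)) in *; nra).
      apply Rmult_le_pos; [lra|]. assert (0 <= (c1*s2+s1*c2)*s1) by (apply Rmult_le_pos; lra).
      assert (0 <= c2*(1-(c1*c2-s1*s2))) by (apply Rmult_le_pos; lra). lra. }
    assert ((c2*(c1*c1*s2*s2-1+c1*c2)-c1*s1*s1*s2*s2) <= 0).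
    { assert (Ga : c1*c1 <= 1) by (clear -Hc1 Hc1'; nra).
      assert (Gb : 0 <= s2*s2) by (apply Rle_0_sqr).
      assert (Gc : c1*c1*s2*s2 <= s2*s2) by (clear -Ga Gb; nra).
      assert (Gd : c1*c2 - c2*c2 <= 0) by (clear -Hc12 Hc2; nra).
      assert (c2*(c1*c1*s2*s2-1+c1*c2) <= 0).
      { assert (c1*c1*s2*s2-1+c1*c2 <= 0) by (clear -H2 Gc Gd; nra).
        assert (0 <= c2*(-(c1*c1*s2*s2-1+c1*c2))) by (apply Rmult_le_pos; lra). lra. }
      assert (0 <= c1*s1*s1*s2*s2) by (repeat apply Rmult_le_pos; lra). lra. }
    set (A := ((c1*c2+s1*s2)*(c2*(1-(c1*c2+s1*s2))+(s1*c2-c1*s2)*s1))) in *. set (B := ((c1*c2-s1*s2)*(c2*(1-(c1*c2-s1*s2))+(c1*s2+s1*c2)*s1))) in *. set (L := (c2*(c1*c1*s2*s2-1+c1*c2)-c1*s1*s1*s2*s2)) in *.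
    assert (0 <= (1+x)*A) by (apply Rmult_le_pos; lra).
    assert (0 <= (1-x)*B) by (apply Rmult_le_pos; lra).
    assert (0 <= L*(x*x-1)).
    { assert (x*x <= 1) by (clear -Hx; nra).
      assert (0 <= (-L)*(1-x*x)) by (apply Rmult_le_pos; lra). lra. }
    set (m := (((s1*c2-x*c1*s2)*(s1*c2-x*c1*s2)-x*x)*c2+((s1*s2+x*c1*c2)*x*c2+(c1*c2+x*s1*s2)*(s1*c2-x*c1*s2)*s1))) in *. lra. }
  assert (HK : 0 < ((s1*c2-x*c1*s2)*(s1*c2-x*c1*s2)-x*x)).
  { assert (0 < ((s1*c2-x*c1*s2)*(s1*c2-x*c1*s2)-x*x)*c2) by lra. set (k := ((s1*c2-x*c1*s2)*(s1*c2-x*c1*s2)-x*x)) in *. clear -H Hc2. nra. }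
  assert (Hc : 0 < (s1*c2-x*c1*s2)).
  { rewrite Ec. destruct (Rle_lt_dec (c1*s2) 0) as [h|h].
    - assert (c1*s2 = 0) by (assert (0 <= c1*s2) by (apply Rmult_le_pos; lra); lra).
      assert (0 < s1*c2) by (apply Rmult_lt_0_compat; lra).
      assert (0 <= (1-x)*(c1*s2)) by (apply Rmult_le_pos; lra). lra.
    - assert (0 < (1-x)*(c1*s2)) by (apply Rmult_lt_0_compat; lra). lra. }
  repeat split; lra.
Qed.

Lemma sign_arg (M r a ast : R) (Q : R -> R) : -1 <= a <= 1 -> -1 <= ast <= 1 -> 0 < M - r*ast ->
  (forall y, Q y <= (M - r*y)*(M - r*y)) -> (forall y, -1 < y < 1 -> 0 < Q y) -> 0 <= M - r*a.
Proof.
  intros Ha Hs HM HQ HP.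
  destruct (Rle_lt_dec 0 (M - r*a)) as [h|h]; [exact h|exfalso].
  assert (Hr : r <> 0) by (intro Z; rewrite Z in *; lra).
  set (y0 := M / r).
  assert (E : r*y0 = M) by (unfold y0; field; exact Hr).
  assert (Hy : -1 < y0 < 1).
  { destruct (Rlt_dec 0 r) as [rp|rn].
    - split; nra.
    - assert (r < 0) by lra. split; nra. }
  specialize (HQ y0). specialize (HP y0 Hy).
  replace (M - r*y0) with 0 in HQ by lra. lra.
Qed.

Lemma Id1 s1 c1 s2 c2 x : s1*s1+c1*c1=1 -> s2*s2+c2*c2=1 -> ((c1*c2+x*s1*s2)*(s1*s2+x*c1*c2)*x+(s1*c2-x*c1*s2)*s1*c2*(1-x*x))*c2 - (c1*c2+x*s1*s2)*((s1*s2+x*c1*c2)*x*c2+(c1*c2+x*s1*s2)*(s1*c2-x*c1*s2)*s1) = ((s1*c2-x*c1*s2)*(s1*c2-x*c1*s2)-x*x)*(s1*c2-x*c1*s2)*s1.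
Proof. intros H1 H2. nsatz. Qed.
Lemma Id2 s1 c1 s2 c2 x : s1*s1+c1*c1=1 -> s2*s2+c2*c2=1 ->
  ((s1*s2+x*c1*c2)*((s1*c2-x*c1*s2)*(s1*c2-x*c1*s2)-x*x)*c2 + x*((s1*s2+x*c1*c2)*x*c2+(c1*c2+x*s1*s2)*(s1*c2-x*c1*s2)*s1))*((s1*s2+x*c1*c2)*((s1*c2-x*c1*s2)*(s1*c2-x*c1*s2)-x*x)*c2 + x*((s1*s2+x*c1*c2)*x*c2+(c1*c2+x*s1*s2)*(s1*c2-x*c1*s2)*s1)) + (s1*c2-x*c1*s2)*(s1*c2-x*c1*s2)*(((s1*c2-x*c1*s2)*(s1*c2-x*c1*s2)-x*x)*((s1*c2-x*c1*s2)*(s1*c2-x*c1*s2)-x*x)*c2*c2 - ((s1*s2+x*c1*c2)*x*c2+(c1*c2+x*s1*s2)*(s1*c2-x*c1*s2)*s1)*((s1*s2+x*c1*c2)*x*c2+(c1*c2+x*s1*s2)*(s1*c2-x*c1*s2)*s1)) = (s1*c2-x*c1*s2)*(s1*c2-x*c1*s2)*s1*s1*((s1*c2-x*c1*s2)*(s1*c2-x*c1*s2)-x*x)*((s1*c2-x*c1*s2)*(s1*c2-x*c1*s2)-x*x).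
Proof. intros H1 H2. nsatz. Qed.
Lemma Id3 s1 c1 s2 c2 x a : s1*s1+c1*c1=1 -> s2*s2+c2*c2=1 ->
  (((c1*c2+x*s1*s2)*(s1*s2+x*c1*c2)*x+(s1*c2-x*c1*s2)*s1*c2*(1-x*x)) - (c1*c2+x*s1*s2)*a*((s1*c2-x*c1*s2)*(s1*c2-x*c1*s2)-x*x))*(((c1*c2+x*s1*s2)*(s1*s2+x*c1*c2)*x+(s1*c2-x*c1*s2)*s1*c2*(1-x*x)) - (c1*c2+x*s1*s2)*a*((s1*c2-x*c1*s2)*(s1*c2-x*c1*s2)-x*x)) - ((s1*c2-x*c1*s2)*(s1*c2-x*c1*s2)-x*x)*((s1*c2-x*c1*s2)*(s1*c2-x*c1*s2)-x*x)*(((s1*s2+x*c1*c2)+x*a)*((s1*s2+x*c1*c2)+x*a)+(s1*c2-x*c1*s2)*(s1*c2-x*c1*s2)*(1-a*a)) = (1-x*x)*(a*((s1*c2-x*c1*s2)*(s1*c2-x*c1*s2)-x*x)*c2-((s1*s2+x*c1*c2)*x*c2+(c1*c2+x*s1*s2)*(s1*c2-x*c1*s2)*s1))*(a*((s1*c2-x*c1*s2)*(s1*c2-x*c1*s2)-x*x)*c2-((s1*s2+x*c1*c2)*x*c2+(c1*c2+x*s1*s2)*(s1*c2-x*c1*s2)*s1)).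
Proof. intros H1 H2. nsatz. Qed.
Lemma Id4 s1 c1 s2 c2 x : s1*s1+c1*c1=1 -> s2*s2+c2*c2=1 -> ((s1*c2-x*c1*s2)*(s1*c2-x*c1*s2)-x*x) + (c1*c2+x*s1*s2)*(s1*s2+x*c1*c2)*x = (1-x*x)*s1*c2*(s1*c2-x*c1*s2).
Proof. intros H1 H2. nsatz. Qed.

Lemma mid_upper s1 c1 s2 c2 x a : Dom s1 c1 s2 c2 -> -1 <= x <= 1 -> -(s1*c2*(s1+(c1*c2+s1*s1)*s2)) < (c2+c1*c2*c2-c1*s2*s2*(c1*c2+s1*s1))*x -> (c2+c1*c2*c2-c1*s2*s2*(c1*c2+s1*s1))*x < (s1*c2*(s1-(c1*c2+s1*s1)*s2)) ->
  -1 <= a <= 1 ->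
  0 <= ((c1*c2+x*s1*s2)*(s1*s2+x*c1*c2)*x+(s1*c2-x*c1*s2)*s1*c2*(1-x*x))/((s1*c2-x*c1*s2)*(s1*c2-x*c1*s2)-x*x) - (c1*c2+x*s1*s2)*a /\
  ((s1*s2+x*c1*c2)+x*a)*((s1*s2+x*c1*c2)+x*a) + (s1*c2-x*c1*s2)*(s1*c2-x*c1*s2)*(1-a*a) <= (((c1*c2+x*s1*s2)*(s1*s2+x*c1*c2)*x+(s1*c2-x*c1*s2)*s1*c2*(1-x*x))/((s1*c2-x*c1*s2)*(s1*c2-x*c1*s2)-x*x) - (c1*c2+x*s1*s2)*a)*(((c1*c2+x*s1*s2)*(s1*s2+x*c1*c2)*x+(s1*c2-x*c1*s2)*s1*c2*(1-x*x))/((s1*c2-x*c1*s2)*(s1*c2-x*c1*s2)-x*x) - (c1*c2+x*s1*s2)*a).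
Proof.
  intros HD Hx Hl Hu Ha.
  pose proof (mid_facts _ _ _ _ _ HD Hx Hl Hu) as (Hs1p & Hc & HK & Hap & Ham).
  pose proof HD as HD'. dom HD'.
  assert (PQ : forall y, ((s1*s2+x*c1*c2)+x*y)*((s1*s2+x*c1*c2)+x*y) + (s1*c2-x*c1*s2)*(s1*c2-x*c1*s2)*(1-y*y) <= (((c1*c2+x*s1*s2)*(s1*s2+x*c1*c2)*x+(s1*c2-x*c1*s2)*s1*c2*(1-x*x))/((s1*c2-x*c1*s2)*(s1*c2-x*c1*s2)-x*x) - (c1*c2+x*s1*s2)*y)*(((c1*c2+x*s1*s2)*(s1*s2+x*c1*c2)*x+(s1*c2-x*c1*s2)*s1*c2*(1-x*x))/((s1*c2-x*c1*s2)*(s1*c2-x*c1*s2)-x*x) - (c1*c2+x*s1*s2)*y)).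
  { intro y. pose proof (Id3 _ _ _ _ x y H1 H2) as E3.
    assert (E : ((c1*c2+x*s1*s2)*(s1*s2+x*c1*c2)*x+(s1*c2-x*c1*s2)*s1*c2*(1-x*x))/((s1*c2-x*c1*s2)*(s1*c2-x*c1*s2)-x*x) - (c1*c2+x*s1*s2)*y = (((c1*c2+x*s1*s2)*(s1*s2+x*c1*c2)*x+(s1*c2-x*c1*s2)*s1*c2*(1-x*x)) - (c1*c2+x*s1*s2)*y*((s1*c2-x*c1*s2)*(s1*c2-x*c1*s2)-x*x))/((s1*c2-x*c1*s2)*(s1*c2-x*c1*s2)-x*x)) by (field; lra).
    rewrite E.
    set (k := ((s1*c2-x*c1*s2)*(s1*c2-x*c1*s2)-x*x)) in *. set (n := ((c1*c2+x*s1*s2)*(s1*s2+x*c1*c2)*x+(s1*c2-x*c1*s2)*s1*c2*(1-x*x))) in *. set (q := ((s1*s2+x*c1*c2)+x*y)*((s1*s2+x*c1*c2)+x*y) + (s1*c2-x*c1*s2)*(s1*c2-x*c1*s2)*(1-y*y)) in *.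
    set (w := (1-x*x)*(y*k*c2-((s1*s2+x*c1*c2)*x*c2+(c1*c2+x*s1*s2)*(s1*c2-x*c1*s2)*s1))*(y*k*c2-((s1*s2+x*c1*c2)*x*c2+(c1*c2+x*s1*s2)*(s1*c2-x*c1*s2)*s1))) in *.
    assert (Hw : 0 <= w).
    { unfold w. assert (0 <= 1 - x*x) by (clear -Hx; nra).
      rewrite Rmult_assoc. apply Rmult_le_pos; [lra|apply Rle_0_sqr]. }
    apply Rmult_le_reg_r with (k*k). nra.
    replace ((n - (c1*c2+x*s1*s2) * y * k) / k * ((n - (c1*c2+x*s1*s2) * y * k) / k) * (k * k)) with ((n - (c1*c2+x*s1*s2)*y*k)*(n - (c1*c2+x*s1*s2)*y*k)) by (field; lra).
    lra. }
  split; [|apply PQ].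
  set (ast := ((s1*s2+x*c1*c2)*x*c2+(c1*c2+x*s1*s2)*(s1*c2-x*c1*s2)*s1)/(((s1*c2-x*c1*s2)*(s1*c2-x*c1*s2)-x*x)*c2)).
  assert (HKc : 0 < ((s1*c2-x*c1*s2)*(s1*c2-x*c1*s2)-x*x)*c2) by (apply Rmult_lt_0_compat; lra).
  assert (Hast : -1 <= ast <= 1).
  { unfold ast. set (k := ((s1*c2-x*c1*s2)*(s1*c2-x*c1*s2)-x*x)*c2) in *. set (y := ((s1*s2+x*c1*c2)*x*c2+(c1*c2+x*s1*s2)*(s1*c2-x*c1*s2)*s1)) in *.
    assert (Ek : k*c2 = k*c2) by reflexivity.
    split.
    - apply Rmult_le_reg_r with k; [lra|]. replace (y/k*k) with y by (field; lra). lra.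
    - apply Rmult_le_reg_r with k; [lra|]. replace (y/k*k) with y by (field; lra). lra. }
  assert (HM : ((c1*c2+x*s1*s2)*(s1*s2+x*c1*c2)*x+(s1*c2-x*c1*s2)*s1*c2*(1-x*x))/((s1*c2-x*c1*s2)*(s1*c2-x*c1*s2)-x*x) - (c1*c2+x*s1*s2)*ast = (s1*c2-x*c1*s2)*s1/c2).
  { pose proof (Id1 _ _ _ _ x H1 H2) as E1. unfold ast.
    apply Rmult_eq_reg_r with (((s1*c2-x*c1*s2)*(s1*c2-x*c1*s2)-x*x)*c2); [|lra].
    replace ((((c1*c2+x*s1*s2)*(s1*s2+x*c1*c2)*x+(s1*c2-x*c1*s2)*s1*c2*(1-x*x)) / ((s1*c2-x*c1*s2)*(s1*c2-x*c1*s2)-x*x) - (c1*c2+x*s1*s2) * (((s1*s2+x*c1*c2)*x*c2+(c1*c2+x*s1*s2)*(s1*c2-x*c1*s2)*s1) / (((s1*c2-x*c1*s2)*(s1*c2-x*c1*s2)-x*x) * c2))) * (((s1*c2-x*c1*s2)*(s1*c2-x*c1*s2)-x*x) * c2)) with (((c1*c2+x*s1*s2)*(s1*s2+x*c1*c2)*x+(s1*c2-x*c1*s2)*s1*c2*(1-x*x))*c2 - (c1*c2+x*s1*s2)*((s1*s2+x*c1*c2)*x*c2+(c1*c2+x*s1*s2)*(s1*c2-x*c1*s2)*s1)) by (field; lra).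
    rewrite E1. field. lra. }
  apply (sign_arg (((c1*c2+x*s1*s2)*(s1*s2+x*c1*c2)*x+(s1*c2-x*c1*s2)*s1*c2*(1-x*x))/((s1*c2-x*c1*s2)*(s1*c2-x*c1*s2)-x*x)) (c1*c2+x*s1*s2) a ast (fun y => ((s1*s2+x*c1*c2)+x*y)*((s1*s2+x*c1*c2)+x*y) + (s1*c2-x*c1*s2)*(s1*c2-x*c1*s2)*(1-y*y))); auto.
  - rewrite HM. apply Rdiv_lt_0_compat; [apply Rmult_lt_0_compat|]; lra.
  - intros y Hy. assert (0 < 1 - y*y) by (clear -Hy; nra).
    assert (0 < (s1*c2-x*c1*s2)*(s1*c2-x*c1*s2)*(1-y*y)) by (apply Rmult_lt_0_compat; [nra|lra]).
    assert (0 <= ((s1*s2+x*c1*c2)+x*y)*((s1*s2+x*c1*c2)+x*y)) by apply Rle_0_sqr. lra.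
Qed.

Lemma mid_achieve s1 c1 s2 c2 x : Dom s1 c1 s2 c2 -> -1 <= x <= 1 -> -(s1*c2*(s1+(c1*c2+s1*s1)*s2)) < (c2+c1*c2*c2-c1*s2*s2*(c1*c2+s1*s1))*x -> (c2+c1*c2*c2-c1*s2*s2*(c1*c2+s1*s1))*x < (s1*c2*(s1-(c1*c2+s1*s1)*s2)) ->
  exists a a1 b b1, -1 <= a <= 1 /\ -1 <= b <= 1 /\ 0 <= a1 /\ 0 <= b1 /\
    a*a + a1*a1 = 1 /\ b*b + b1*b1 = 1 /\ (c1*c2+x*s1*s2)*a + (s1*s2+x*c1*c2)*b + x*a*b + (s1*c2-x*c1*s2)*a1*b1 = ((c1*c2+x*s1*s2)*(s1*s2+x*c1*c2)*x+(s1*c2-x*c1*s2)*s1*c2*(1-x*x))/((s1*c2-x*c1*s2)*(s1*c2-x*c1*s2)-x*x).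
Proof.
  intros HD Hx Hl Hu.
  pose proof (mid_facts _ _ _ _ _ HD Hx Hl Hu) as (Hs1p & Hc & HK & Hap & Ham).
  pose proof HD as HD'. dom HD'.
  set (a := ((s1*s2+x*c1*c2)*x*c2+(c1*c2+x*s1*s2)*(s1*c2-x*c1*s2)*s1)/(((s1*c2-x*c1*s2)*(s1*c2-x*c1*s2)-x*x)*c2)).
  assert (HKc : 0 < ((s1*c2-x*c1*s2)*(s1*c2-x*c1*s2)-x*x)*c2) by (apply Rmult_lt_0_compat; lra).
  assert (Ha : -1 <= a <= 1).
  { unfold a. set (k := ((s1*c2-x*c1*s2)*(s1*c2-x*c1*s2)-x*x)*c2) in *. set (y := ((s1*s2+x*c1*c2)*x*c2+(c1*c2+x*s1*s2)*(s1*c2-x*c1*s2)*s1)) in *.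
    split.
    - apply Rmult_le_reg_r with k; [lra|]. replace (y/k*k) with y by (field; lra). lra.
    - apply Rmult_le_reg_r with k; [lra|]. replace (y/k*k) with y by (field; lra). lra. }
  assert (HM : ((c1*c2+x*s1*s2)*(s1*s2+x*c1*c2)*x+(s1*c2-x*c1*s2)*s1*c2*(1-x*x))/((s1*c2-x*c1*s2)*(s1*c2-x*c1*s2)-x*x) - (c1*c2+x*s1*s2)*a = (s1*c2-x*c1*s2)*s1/c2).
  { pose proof (Id1 _ _ _ _ x H1 H2) as E1. unfold a.
    apply Rmult_eq_reg_r with (((s1*c2-x*c1*s2)*(s1*c2-x*c1*s2)-x*x)*c2); [|lra].
    replace ((((c1*c2+x*s1*s2)*(s1*s2+x*c1*c2)*x+(s1*c2-x*c1*s2)*s1*c2*(1-x*x)) / ((s1*c2-x*c1*s2)*(s1*c2-x*c1*s2)-x*x) - (c1*c2+x*s1*s2) * (((s1*s2+x*c1*c2)*x*c2+(c1*c2+x*s1*s2)*(s1*c2-x*c1*s2)*s1) / (((s1*c2-x*c1*s2)*(s1*c2-x*c1*s2)-x*x) * c2))) * (((s1*c2-x*c1*s2)*(s1*c2-x*c1*s2)-x*x) * c2)) with (((c1*c2+x*s1*s2)*(s1*s2+x*c1*c2)*x+(s1*c2-x*c1*s2)*s1*c2*(1-x*x))*c2 - (c1*c2+x*s1*s2)*((s1*s2+x*c1*c2)*x*c2+(c1*c2+x*s1*s2)*(s1*c2-x*c1*s2)*s1)) by (field; lra).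
    rewrite E1. field. lra. }
  assert (Ea : a*(((s1*c2-x*c1*s2)*(s1*c2-x*c1*s2)-x*x)*c2) = ((s1*s2+x*c1*c2)*x*c2+(c1*c2+x*s1*s2)*(s1*c2-x*c1*s2)*s1)) by (unfold a; field; lra).
  assert (EQ : ((s1*s2+x*c1*c2)+x*a)*((s1*s2+x*c1*c2)+x*a) + (s1*c2-x*c1*s2)*(s1*c2-x*c1*s2)*(1-a*a) = ((s1*c2-x*c1*s2)*s1/c2)*((s1*c2-x*c1*s2)*s1/c2)).
  { pose proof (Id2 _ _ _ _ x H1 H2) as E2.
    apply Rmult_eq_reg_r with ((((s1*c2-x*c1*s2)*(s1*c2-x*c1*s2)-x*x)*c2)*(((s1*c2-x*c1*s2)*(s1*c2-x*c1*s2)-x*x)*c2)); [|nra].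
    replace ((((s1*s2+x*c1*c2)+x*a)*((s1*s2+x*c1*c2)+x*a) + (s1*c2-x*c1*s2)*(s1*c2-x*c1*s2)*(1-a*a))*((((s1*c2-x*c1*s2)*(s1*c2-x*c1*s2)-x*x)*c2)*(((s1*c2-x*c1*s2)*(s1*c2-x*c1*s2)-x*x)*c2))) with
      (((s1*s2+x*c1*c2)*((s1*c2-x*c1*s2)*(s1*c2-x*c1*s2)-x*x)*c2 + x*(a*(((s1*c2-x*c1*s2)*(s1*c2-x*c1*s2)-x*x)*c2)))*((s1*s2+x*c1*c2)*((s1*c2-x*c1*s2)*(s1*c2-x*c1*s2)-x*x)*c2 + x*(a*(((s1*c2-x*c1*s2)*(s1*c2-x*c1*s2)-x*x)*c2))) + (s1*c2-x*c1*s2)*(s1*c2-x*c1*s2)*(((s1*c2-x*c1*s2)*(s1*c2-x*c1*s2)-x*x)*((s1*c2-x*c1*s2)*(s1*c2-x*c1*s2)-x*x)*c2*c2 - (a*(((s1*c2-x*c1*s2)*(s1*c2-x*c1*s2)-x*x)*c2))*(a*(((s1*c2-x*c1*s2)*(s1*c2-x*c1*s2)-x*x)*c2)))) by ring.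
    rewrite Ea, E2. field. lra. }
  set (a1 := sqrt (1 - a*a)).
  assert (Ha1 : a1*a1 = 1 - a*a) by (unfold a1; apply sqrt_sqrt; nra).
  assert (Ha1p : 0 <= a1) by (unfold a1; apply sqrt_pos).
  set (b := ((s1*s2+x*c1*c2) + x*a)*c2/((s1*c2-x*c1*s2)*s1)).
  set (b1 := a1*c2/s1).
  assert (Hb : b*b + b1*b1 = 1).
  { assert (E : b*b + b1*b1 = (((s1*s2+x*c1*c2)+x*a)*((s1*s2+x*c1*c2)+x*a) + (s1*c2-x*c1*s2)*(s1*c2-x*c1*s2)*(a1*a1))*(c2/((s1*c2-x*c1*s2)*s1))*(c2/((s1*c2-x*c1*s2)*s1)))
      by (unfold b, b1; field; split; lra).
    rewrite E, Ha1, EQ. field. split; lra. }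
  exists a, a1, b, b1. split; [exact Ha|]. split.
  { assert (0 <= b1*b1) by apply Rle_0_sqr. split; nra. }
  split; [exact Ha1p|]. split.
  { unfold b1. apply Rmult_le_pos; [apply Rmult_le_pos; lra|]. apply Rlt_le, Rinv_0_lt_compat; lra. }
  split; [lra|]. split; [exact Hb|].
  assert (E : (c1*c2+x*s1*s2)*a + (s1*s2+x*c1*c2)*b + x*a*b + (s1*c2-x*c1*s2)*a1*b1 = (c1*c2+x*s1*s2)*a + (((s1*s2+x*c1*c2)+x*a)*((s1*s2+x*c1*c2)+x*a) + (s1*c2-x*c1*s2)*(s1*c2-x*c1*s2)*(a1*a1))*(c2/((s1*c2-x*c1*s2)*s1)))
    by (unfold b, b1; field; split; lra).
  rewrite E, Ha1, EQ. replace (((c1*c2+x*s1*s2)*(s1*s2+x*c1*c2)*x+(s1*c2-x*c1*s2)*s1*c2*(1-x*x))/((s1*c2-x*c1*s2)*(s1*c2-x*c1*s2)-x*x)) with ((c1*c2+x*s1*s2)*a + (s1*c2-x*c1*s2)*s1/c2) by lra. field. split; lra.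
Qed.

Lemma overlap_re g1 g2 x psi phi p0r p0i p1r p1i q0r q0i q1r q1i :
  psi 0%nat = (p0r,p0i) -> psi 1%nat = (p1r,p1i) ->
  phi 0%nat = (q0r,q0i) -> phi 1%nat = (q1r,q1i) ->
  Cre (overlap (rho g1 g2 x) psi phi) =
  (let A := p0r*p0r+p0i*p0i - (p1r*p1r+p1i*p1i) in
  let A1 := 2*(p0r*p1r+p0i*p1i) in
  let A2 := 2*(p0r*p1i-p0i*p1r) in
  let B := q0r*q0r+q0i*q0i - (q1r*q1r+q1i*q1i) in
  let B1 := 2*(q0r*q1r+q0i*q1i) in
  let B2 := 2*(q0r*q1i-q0i*q1r) in
  let N := p0r*p0r+p0i*p0i + (p1r*p1r+p1i*p1i) in
  let M := q0r*q0r+q0i*q0i + (q1r*q1r+q1i*q1i) in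
  let u := uu g1 g2 in let v := vv g1 g2 in let z1 := zz1 g1 g2 in let z2 := zz2 g1 g2 in
   (N*M + (u+x*v)*A*M + (v+x*u)*N*B + x*A*B + (z1-x*z2)*A1*B1 + (z2-x*z1)*A2*B2)/4).
Proof.
  intros H0 H1 H2 H3. unfold overlap, rho, Sigma0, Sigma3, mtrace, mmul, kron2, proj, madd, mscale, sig, tau, I4, I2,
    pauli1, pauli2, pauli3, mat2; cbn.
  rewrite H0, H1, H2, H3.
  unfold Cre, Cadd, Cmul, RtoC, Cconj, Copp, C0, C1, Ci; cbn.
  field.
Qed.

Lemma overlap_im g1 g2 x psi phi p0 p1 q0 q1 :
  psi 0%nat = (p0,0) -> psi 1%nat = (p1,0) ->
  phi 0%nat = (q0,0) -> phi 1%nat = (q1,0) ->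
  Cim (overlap (rho g1 g2 x) psi phi) = 0.
Proof.
  intros H0 H1 H2 H3. unfold overlap, rho, Sigma0, Sigma3, mtrace, mmul, kron2, proj, madd, mscale, sig, tau, I4, I2,
    pauli1, pauli2, pauli3, mat2; cbn.
  rewrite H0, H1, H2, H3.
  unfold Cim, Cadd, Cmul, RtoC, Cconj, Copp, C0, C1, Ci; cbn.
  field.
Qed.

Lemma mkvec a a1 : -1 <= a <= 1 -> 0 <= a1 -> a*a + a1*a1 = 1 ->
  exists p0 p1, p0*p0 + p1*p1 = 1 /\ p0*p0 - p1*p1 = a /\ 2*(p0*p1) = a1.
Proof.
  intros Ha Ha1 E.
  exists (sqrt ((1+a)/2)), (sqrt ((1-a)/2)).
  assert (E0 : sqrt ((1+a)/2) * sqrt ((1+a)/2) = (1+a)/2) by (apply sqrt_sqrt; lra).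
  assert (E1 : sqrt ((1-a)/2) * sqrt ((1-a)/2) = (1-a)/2) by (apply sqrt_sqrt; lra).
  split; [lra|]. split; [lra|].
  assert (P0 : 0 <= sqrt ((1+a)/2)) by apply sqrt_pos.
  assert (P1 : 0 <= sqrt ((1-a)/2)) by apply sqrt_pos.
  apply Rsqr_inj.
  - apply Rmult_le_pos; [lra|]. apply Rmult_le_pos; assumption.
  - exact Ha1.
  - unfold Rsqr.
    replace (2 * (sqrt ((1 + a) / 2) * sqrt ((1 - a) / 2)) * (2 * (sqrt ((1 + a) / 2) * sqrt ((1 - a) / 2))))
      with (4 * (sqrt ((1 + a) / 2) * sqrt ((1 + a) / 2)) * (sqrt ((1 - a) / 2) * sqrt ((1 - a) / 2))) by ring.
    rewrite E0, E1. lra.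
Qed.

Lemma dom_trig g1 g2 : 0 <= g2 -> g2 <= g1 -> g1 <= PI / 2 -> g1 + g2 <= PI / 2 ->
  Dom (sin g1) (cos g1) (sin g2) (cos g2).
Proof.
  intros h1 h2 h3 h4. pose proof PI_RGT_0 as HPI.
  unfold Dom.
  pose proof (sin2_cos2 g1) as E1. pose proof (sin2_cos2 g2) as E2. unfold Rsqr in E1, E2.
  split; [lra|]. split; [lra|].
  split; [apply sin_ge_0; lra|].
  split; [apply cos_ge_0; lra|].
  split; [apply sin_ge_0; lra|].
  split; [apply cos_gt_0; lra|].
  split; [apply sin_incr_1; lra|].
  split; [apply cos_decr_1; lra|].
  split; [rewrite <- (sin_shift g2); apply sin_incr_1; lra|].
  split; [rewrite <- (sin_shift g1); apply sin_incr_1; lra|].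
  split.
  - replace (sin g1 * cos g2 - cos g1 * sin g2) with (sin (g1 - g2)) by (rewrite sin_minus; ring).
    apply sin_ge_0; lra.
  - replace (cos g1 * cos g2 - sin g1 * sin g2) with (cos (g1 + g2)) by (rewrite cos_plus; ring).
    apply cos_ge_0; lra.
Qed.

Lemma x33_eq g1 g2 s1 c1 s2 c2 : sin g1 = s1 -> cos g1 = c1 -> sin g2 = s2 -> cos g2 = c2 ->
  Dom s1 c1 s2 c2 -> x3_3 g1 g2 = - (s1*c2*(s1+(c1*c2+s1*s1)*s2)) / (c2+c1*c2*c2-c1*s2*s2*(c1*c2+s1*s1)) /\ x3_4 g1 g2 = (s1*c2*(s1-(c1*c2+s1*s1)*s2)) / (c2+c1*c2*c2-c1*s2*s2*(c1*c2+s1*s1)).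
Proof.
  intros e1 e2 e3 e4 HD. pose proof (Den_pos _ _ _ _ HD) as HDen. pose proof HD as HD'. dom HD'.
  unfold x3_3, x3_4, x3_34, tan. rewrite e1, e2, e3, e4.
  assert (E : 1 + c1 * (c2 - s2 * (c1 * s2 + s1 ^ 2 * (s2 / c2))) = (c2+c1*c2*c2-c1*s2*s2*(c1*c2+s1*s1)) / c2) by (field; lra).
  rewrite E. split; field; split; lra.
Qed.

Lemma g_is_from g1 g2 x M s1 c1 s2 c2 : sin g1 = s1 -> cos g1 = c1 -> sin g2 = s2 -> cos g2 = c2 ->
  -1 <= x <= 1 -> Dom s1 c1 s2 c2 ->
  (forall a, -1 <= a <= 1 -> 0 <= M - (c1*c2+x*s1*s2)*a /\ ((s1*s2+x*c1*c2)+x*a)*((s1*s2+x*c1*c2)+x*a) + (s1*c2-x*c1*s2)*(s1*c2-x*c1*s2)*(1-a*a) <= (M-(c1*c2+x*s1*s2)*a)*(M-(c1*c2+x*s1*s2)*a)) ->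
  (exists a a1 b b1, -1 <= a <= 1 /\ -1 <= b <= 1 /\ 0 <= a1 /\ 0 <= b1 /\ a*a + a1*a1 = 1 /\
      b*b + b1*b1 = 1 /\ (c1*c2+x*s1*s2)*a + (s1*s2+x*c1*c2)*b + x*a*b + (s1*c2-x*c1*s2)*a1*b1 = M) ->
  g_is (rho g1 g2 x) ((1+M)/4).
Proof.
  intros e1 e2 e3 e4 Hx HD Hup Hex.
  pose proof HD as HD'. dom HD'.
  assert (HT : (c1*s2 - x*(s1*c2))*(c1*s2 - x*(s1*c2)) <= (s1*c2-x*c1*s2)*(s1*c2-x*c1*s2)).
  { assert (E : (s1*c2-x*c1*s2)*(s1*c2-x*c1*s2) - (c1*s2 - x*(s1*c2))*(c1*s2 - x*(s1*c2)) = (s1*c2 - c1*s2)*(s1*c2+c1*s2)*(1-x*x)) by ring.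
    assert (0 <= 1 - x*x) by (clear -Hx; nra).
    assert (0 <= s1*c2 + c1*s2) by (apply Rplus_le_le_0_compat; apply Rmult_le_pos; lra).
    assert (0 <= (s1*c2 - c1*s2)*(s1*c2+c1*s2)*(1-x*x)) by (repeat apply Rmult_le_pos; lra).
    lra. }
  split.
  - intros psi phi Hu1 Hu2.
    destruct (psi 0%nat) as [p0r p0i] eqn:E0. destruct (psi 1%nat) as [p1r p1i] eqn:E1.
    destruct (phi 0%nat) as [q0r q0i] eqn:F0. destruct (phi 1%nat) as [q1r q1i] eqn:F1.
    rewrite (overlap_re g1 g2 x psi phi p0r p0i p1r p1i q0r q0i q1r q1i E0 E1 F0 F1).
    unfold unit2, Cnorm2 in Hu1, Hu2. rewrite E0, E1 in Hu1. rewrite F0, F1 in Hu2. cbn in Hu1, Hu2.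
    cbv zeta. unfold uu, vv, zz1, zz2. rewrite e1, e2, e3, e4.
    set (A := p0r*p0r+p0i*p0i - (p1r*p1r+p1i*p1i)).
    set (A1 := 2*(p0r*p1r+p0i*p1i)).
    set (A2 := 2*(p0r*p1i-p0i*p1r)).
    set (B := q0r*q0r+q0i*q0i - (q1r*q1r+q1i*q1i)).
    set (B1 := 2*(q0r*q1r+q0i*q1i)).
    set (B2 := 2*(q0r*q1i-q0i*q1r)).
    assert (NA : A*A + A1*A1 + A2*A2 = (p0r*p0r+p0i*p0i + (p1r*p1r+p1i*p1i))*(p0r*p0r+p0i*p0i + (p1r*p1r+p1i*p1i)))
      by (unfold A, A1, A2; ring).
    assert (NB : B*B + B1*B1 + B2*B2 = (q0r*q0r+q0i*q0i + (q1r*q1r+q1i*q1i))*(q0r*q0r+q0i*q0i + (q1r*q1r+q1i*q1i)))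
      by (unfold B, B1, B2; ring).
    rewrite Hu1 in NA |- *. rewrite Hu2 in NB |- *. rewrite Rmult_1_r in NA, NB.
    assert (HA : -1 <= A <= 1).
    { assert (0 <= A1*A1) by apply Rle_0_sqr. assert (0 <= A2*A2) by apply Rle_0_sqr.
      assert (A*A <= 1) by lra. split; nra. }
    destruct (Hup A HA) as (HM1 & HM2).
    pose proof (bound_gen (c1*c2+x*s1*s2) (s1*s2+x*c1*c2) (s1*c2-x*c1*s2) (c1*s2 - x*(s1*c2)) x M A A1 A2 B B1 B2 NA NB HT HM1 HM2) as HB.
    assert (EE : 1 * 1 + (c1 * c2 + x * (s1 * s2)) * A * 1 + (s1 * s2 + x * (c1 * c2)) * 1 * B + x * A * B +
        (s1 * c2 - x * (c1 * s2)) * A1 * B1 + (c1 * s2 - x * (s1 * c2)) * A2 * B2 =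
        1 + ((c1*c2+x*s1*s2) * A + (s1*s2+x*c1*c2) * B + x * A * B + (s1*c2-x*c1*s2) * A1 * B1 + (c1*s2 - x*(s1*c2)) * A2 * B2)) by ring.
    rewrite EE. lra.
  - destruct Hex as (a & a1 & b & b1 & Ha & Hb & Ha1 & Hb1 & Na & Nb & Hv).
    destruct (mkvec a a1 Ha Ha1 Na) as (p0 & p1 & Pp1 & Pp2 & Pp3).
    destruct (mkvec b b1 Hb Hb1 Nb) as (q0 & q1 & Qq1 & Qq2 & Qq3).
    exists (fun n => match n with 0%nat => (p0,0) | _ => (p1,0) end),
           (fun n => match n with 0%nat => (q0,0) | _ => (q1,0) end).
    split. { unfold unit2, Cnorm2; cbn. lra. }
    split. { unfold unit2, Cnorm2; cbn. lra. }
    set (psi := fun n : nat => match n with 0%nat => (p0,0) | _ => (p1,0) end).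
    set (phi := fun n : nat => match n with 0%nat => (q0,0) | _ => (q1,0) end).
    assert (Hre : Cre (overlap (rho g1 g2 x) psi phi) = (1+M)/4).
    { rewrite (overlap_re g1 g2 x psi phi p0 0 p1 0 q0 0 q1 0 eq_refl eq_refl eq_refl eq_refl).
      cbv zeta. unfold uu, vv, zz1, zz2. rewrite e1, e2, e3, e4. rewrite <- Hv.
      replace (p0*p0+0*0-(p1*p1+0*0)) with a by lra.
      replace (q0*q0+0*0-(q1*q1+0*0)) with b by lra.
      replace (p0*p0+0*0+(p1*p1+0*0)) with 1 by lra.
      replace (q0*q0+0*0+(q1*q1+0*0)) with 1 by lra.
      replace (2*(p0*p1+0*0)) with a1 by lra.
      replace (2*(q0*q1+0*0)) with b1 by lra.
      field. }
    assert (Him : Cim (overlap (rho g1 g2 x) psi phi) = 0)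
      by exact (overlap_im g1 g2 x psi phi p0 p1 q0 q1 eq_refl eq_refl eq_refl eq_refl).
    unfold RtoC. rewrite <- Hre, <- Him. unfold Cre, Cim. apply surjective_pairing.
Qed.

Lemma div_le_iff a b D : 0 < D -> (a <= b / D <-> a*D <= b).
Proof. intro HD. split; intro h.
  - apply Rmult_le_reg_r with (/D); [apply Rinv_0_lt_compat; lra|].
    replace (a*D*/D) with a by (field; lra). exact h.
  - replace a with (a*D/D) by (field; lra). unfold Rdiv. apply Rmult_le_compat_r; [apply Rlt_le, Rinv_0_lt_compat; lra|exact h].
Qed.

Lemma div_ge_iff a b D : 0 < D -> (b / D <= a <-> b <= a*D).
Proof. intro HD. split; intro h.
  - apply Rmult_le_reg_r with (/D); [apply Rinv_0_lt_compat; lra|].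
    replace (a*D*/D) with a by (field; lra). exact h.
  - replace a with (a*D/D) by (field; lra). unfold Rdiv. apply Rmult_le_compat_r; [apply Rlt_le, Rinv_0_lt_compat; lra|exact h].
Qed.

Theorem mainTheorem3 (g1 g2 x3 : R) :
  0 <= g2 -> g2 <= g1 -> g1 <= PI / 2 -> g1 + g2 <= PI / 2 ->
  -1 <= x3 -> x3 <= 1 ->
  (-1 <= x3_3 g1 g2 /\ x3_3 g1 g2 <= 0 /\ 0 <= x3_4 g1 g2 /\ x3_4 g1 g2 <= 1) /\
  g_is (rho g1 g2 x3) (g_formula g1 g2 x3).
Proof.
  intros h1 h2 h3 h4 hx1 hx2.
  pose proof (dom_trig g1 g2 h1 h2 h3 h4) as HD.
  unfold g_formula. rewrite cos_plus, cos_minus.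
  rename x3 into x.
  set (s1 := sin g1) in *. set (c1 := cos g1) in *. set (s2 := sin g2) in *. set (c2 := cos g2) in *.
  pose proof (x33_eq g1 g2 s1 c1 s2 c2 eq_refl eq_refl eq_refl eq_refl HD) as (E3 & E4).
  pose proof (Den_pos _ _ _ _ HD) as HDen. pose proof (P3_nn _ _ _ _ HD) as HP3.
  pose proof (P3_le _ _ _ _ HD) as HP3l. pose proof (P4_nn _ _ _ _ HD) as HP4.
  pose proof (P4_le _ _ _ _ HD) as HP4l.
  rewrite E3, E4.
  split.
  { split; [|split; [|split]].
    - apply div_le_iff; [exact HDen|]. lra.
    - apply div_ge_iff; [exact HDen|]. lra.
    - apply div_le_iff; [exact HDen|]. lra.
    - apply div_ge_iff; [exact HDen|]. lra. }
  destruct (Rle_dec x (- (s1*c2*(s1+(c1*c2+s1*s1)*s2)) / (c2+c1*c2*c2-c1*s2*s2*(c1*c2+s1*s1)))) as [hl|hl].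
  - apply div_le_iff in hl; [|exact HDen].
    replace ((1 - x) * (1 + (c1 * c2 - s1 * s2)) / 4) with ((1 + ((c1*c2+x*s1*s2) - (s1*s2+x*c1*c2) - x))/4) by field.
    apply (g_is_from g1 g2 x _ s1 c1 s2 c2 eq_refl eq_refl eq_refl eq_refl); [lra|exact HD| |].
    + intros a Ha. apply case_low; auto. lra.
    + exists 1, 0, (-1), 0. repeat split; first [lra | ring].
  - destruct (Rlt_dec x ((s1*c2*(s1-(c1*c2+s1*s1)*s2)) / (c2+c1*c2*c2-c1*s2*s2*(c1*c2+s1*s1)))) as [hm|hm].
    + assert (hl' : - (s1*c2*(s1+(c1*c2+s1*s1)*s2)) < (c2+c1*c2*c2-c1*s2*s2*(c1*c2+s1*s1))*x).
      { destruct (Rlt_le_dec (- (s1*c2*(s1+(c1*c2+s1*s1)*s2))) ((c2+c1*c2*c2-c1*s2*s2*(c1*c2+s1*s1))*x)) as [q|q]; [exact q|].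
        exfalso. apply hl. apply div_le_iff; [exact HDen|]. lra. }
      assert (hm' : (c2+c1*c2*c2-c1*s2*s2*(c1*c2+s1*s1))*x < (s1*c2*(s1-(c1*c2+s1*s1)*s2))).
      { destruct (Rlt_le_dec ((c2+c1*c2*c2-c1*s2*s2*(c1*c2+s1*s1))*x) (s1*c2*(s1-(c1*c2+s1*s1)*s2))) as [q|q]; [exact q|].
        exfalso. apply (Rlt_not_le _ _ hm). apply div_ge_iff; [exact HDen|]. lra. }
      pose proof (mid_facts _ _ _ _ _ HD (conj hx1 hx2) hl' hm') as (Hs1p & Hc & HK & Hap & Ham).
      pose proof HD as HD'. dom HD'.
      pose proof (Id4 _ _ _ _ x H1 H2) as E4'.
      replace ((1 - x ^ 2) * s1 * c2 * (c2 * s1 - x * c1 * s2) /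
          (-2 * (x ^ 2 - (c2 * s1 - x * c1 * s2) ^ 2))) with ((1 + ((c1*c2+x*s1*s2)*(s1*s2+x*c1*c2)*x+(s1*c2-x*c1*s2)*s1*c2*(1-x*x))/((s1*c2-x*c1*s2)*(s1*c2-x*c1*s2)-x*x))/4).
      2:{ apply Rmult_eq_reg_r with (4*((s1*c2-x*c1*s2)*(s1*c2-x*c1*s2)-x*x)); [|lra].
          replace ((1 + ((c1*c2+x*s1*s2)*(s1*s2+x*c1*c2)*x+(s1*c2-x*c1*s2)*s1*c2*(1-x*x)) / ((s1*c2-x*c1*s2)*(s1*c2-x*c1*s2)-x*x)) / 4 * (4 * ((s1*c2-x*c1*s2)*(s1*c2-x*c1*s2)-x*x))) with (((s1*c2-x*c1*s2)*(s1*c2-x*c1*s2)-x*x) + ((c1*c2+x*s1*s2)*(s1*s2+x*c1*c2)*x+(s1*c2-x*c1*s2)*s1*c2*(1-x*x))) by (field; lra).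
          replace ((1 - x ^ 2) * s1 * c2 * (c2 * s1 - x * c1 * s2) /
             (-2 * (x ^ 2 - (c2 * s1 - x * c1 * s2) ^ 2)) * (4 * ((s1*c2-x*c1*s2)*(s1*c2-x*c1*s2)-x*x))) with (2*((1-x*x)*s1*c2*(s1*c2-x*c1*s2))).
          2:{ field. intro Z. nra. }
          lra. }
      apply (g_is_from g1 g2 x _ s1 c1 s2 c2 eq_refl eq_refl eq_refl eq_refl); [lra|exact HD| |].
      * intros a Ha. apply mid_upper; auto.
      * apply mid_achieve; auto.
    + assert (hu : (s1*c2*(s1-(c1*c2+s1*s1)*s2)) <= (c2+c1*c2*c2-c1*s2*s2*(c1*c2+s1*s1))*x).
      { destruct (Rle_lt_dec (s1*c2*(s1-(c1*c2+s1*s1)*s2)) ((c2+c1*c2*c2-c1*s2*s2*(c1*c2+s1*s1))*x)) as [q|q]; [exact q|].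
        exfalso. apply hm. apply (Rmult_lt_reg_r (c2+c1*c2*c2-c1*s2*s2*(c1*c2+s1*s1))); [exact HDen|].
        replace ((s1*c2*(s1-(c1*c2+s1*s1)*s2))/(c2+c1*c2*c2-c1*s2*s2*(c1*c2+s1*s1))*(c2+c1*c2*c2-c1*s2*s2*(c1*c2+s1*s1))) with (s1*c2*(s1-(c1*c2+s1*s1)*s2)) by (field; lra). lra. }
      replace ((1 + x) * (1 + (c1 * c2 + s1 * s2)) / 4) with ((1 + ((c1*c2+x*s1*s2) + (s1*s2+x*c1*c2) + x))/4) by field.
      apply (g_is_from g1 g2 x _ s1 c1 s2 c2 eq_refl eq_refl eq_refl eq_refl); [lra|exact HD| |].
      * intros a Ha. apply case_up; auto.
      * exists 1, 0, 1, 0. repeat split; first [lra | ring].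
Qed.
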